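(* Let $\mathsf V$ be a variety and $h:\mathbf F_{\mathsf V}(z)\to\prod_{k=1}^m\mathbf E_k$ an algebraic e-generalization problem. Then: (1) if the type of $\mathscr G(h)$ is nullary or infinitary, then the e-generalization type of $h$ is at best infinitary (i.e., infinitary or nullary); (2) if the type of $\mathscr G(h)$ is finitary, then the e-generalization type of $h$ is at best finitary (i.e., not unitary).
   Context: $\mathbf F_{\mathsf V}(z)$ is the free algebra of the variety $\mathsf V$ on one generator $z$. An algebra is projective in $\mathsf V$ iff it is a retract of a free algebra; exact if isomorphic to a finitely generated subalgebra of a finitely generated free algebra of $\mathsf V$. An algebraic e-generalization problem is a homomorphism $h:\mathbf F_{\mathsf V}(z)\to\prod_{k=1}^m\mathbf E_k$ with each $\mathbf E_k$ 1-generated exact and each $p_k\circ h$ surjective. A solution of $h$ is a homomorphism $g:\mathbf F_{\mathsf V}(z)\to\mathbf P$, $\mathbf P$ finitely generated projective, with $f\circ g=h$ for some homomorphism $f$. For homomorphisms with common domain, $g\sqsubseteq g'$ iff $f\circ g'=g$ for some homomorphism $f$; $(\mathscr A(h),\sqsubseteq)$ is the poset of solutions modulo $\sqsubseteq$-equivalence. A minimal complete set in a poset is a set $M$ of pairwise incomparable elements such that every element is above some element of $M$; the e-generalization type of $h$ is unitary/finitary/infinitary/nullary if $(\mathscr A(h),\sqsubseteq)$ has a minimal complete set of cardinality 1 / finite cardinality $>1$ / infinite cardinality / has none (best to worst in this order). $\mathscr G(h)=\{\ker(g): g\text{ a solution of }h\}$, ordered by inclusion. A maximal complete set of congruences in $(\mathscr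 G(h),\subseteq)$ is a set $M\subseteq\mathscr G(h)$ of pairwise incomparable congruences such that every element of $\mathscr G(h)$ is contained in some element of $M$. The type of $\mathscr G(h)$ is unitary/finitary/infinitary/nullary if there is such an $M$ of cardinality 1 / finite cardinality $>1$ / infinite cardinality / there is none. *)

(* Defs.v *)
From mathcomp Require Import all_boot.
From Stdlib Require List.

Set Implicit Arguments.
Unset Strict Implicit.
Unset Printing Implicit Defensive.

Record signature := Signature { op : Type; arity : op -> nat }.

Record algebra (S : signature) := Algebra {
  carrier :> Type;
  interp : forall o : op S, ('I_(arity o) -> carrier) -> carrier }.
Arguments interp {S} a o _ : rename.

Inductive term (S : signature) (X : Type) : Type :=
  | Var : X -> term S X
  | App : forall o : op S, ('I_(arity o) -> term S X) -> term S X.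

Fixpoint eval (S : signature) (X : Type) (A : algebra S) (v : X -> A)
    (t : term S X) : A :=
  match t with
  | Var x => v x
  | App o args => interp A o (fun i => eval v (args i))
  end.

(* A variety is an equationally defined class of algebras (Birkhoff). *)
Record variety (S : signature) := Variety {
  identities : term S nat -> term S nat -> Prop }.

Definition in_V (S : signature) (V : variety S) (A : algebra S) : Prop :=
  forall l r, identities V l r -> forall v : nat -> A, eval v l = eval v r.

Definition is_hom (S : signature) (A B : algebra S) (f : A -> B) : Prop :=
  forall (o : op S) (args : 'I_(arity o) -> A),
    f (interp A o args) = interp B o (fun i => f (args i)).
Arguments is_hom {S} A B f.

Definition is_free (S : signature) (V : variety S) (X : Type) (F : algebra S)
    (gen : X -> F) : Prop :=
  in_V V F /\
  forall (A : algebra S), in_V V A -> forall a : X -> A,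
    (exists f : F -> A, is_hom F A f /\ forall x, f (gen x) = a x) /\
    (forall f1 f2 : F -> A, is_hom F A f1 -> is_hom F A f2 ->
       (forall x, f1 (gen x) = f2 (gen x)) -> forall y, f1 y = f2 y).

Inductive gen_by (S : signature) (A : algebra S) (G : A -> Prop) : A -> Prop :=
  | gen_by_in : forall x, G x -> gen_by G x
  | gen_by_op : forall (o : op S) (args : 'I_(arity o) -> A),
      (forall i, gen_by G (args i)) -> gen_by G (interp A o args).

Definition finitely_generated (S : signature) (A : algebra S) : Prop :=
  exists s : seq A, forall x : A, gen_by (fun y => List.In y s) x.

Definition one_generated (S : signature) (A : algebra S) : Prop :=
  exists a : A, forall x : A, gen_by (fun y => y = a) x.

Definition projective (S : signature) (V : variety S) (P : algebra S) : Prop :=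
  exists (X : Type) (F : algebra S) (gen : X -> F), is_free V gen /\
  exists (r : F -> P) (s : P -> F),
    is_hom F P r /\ is_hom P F s /\ forall p, r (s p) = p.

Definition fg_projective (S : signature) (V : variety S) (P : algebra S) :=
  finitely_generated P /\ projective V P.

(* Exact: isomorphic to a finitely generated subalgebra of a finitely
   generated free algebra of V (i.e. f.g. and injectively embeddable). *)
Definition exact (S : signature) (V : variety S) (E : algebra S) : Prop :=
  exists (n : nat) (Fn : algebra S) (gen : 'I_n -> Fn), is_free V gen /\
  finitely_generated E /\
  exists e : E -> Fn, is_hom E Fn e /\ injective e.

Definition prod_alg (S : signature) (m : nat) (E : 'I_m -> algebra S)
  : algebra S :=
  @Algebra S (forall k : 'I_m, E k)
    (fun o args => fun k => interp (E k) o (fun i => args i k)).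

Definition cand (S : signature) (F : algebra S) := {P : algebra S & F -> P}.

Definition is_solution (S : signature) (V : variety S) (F : algebra S)
    (m : nat) (E : 'I_m -> algebra S) (h : F -> prod_alg E)
    (s : cand F) : Prop :=
  fg_projective V (projT1 s) /\ is_hom F (projT1 s) (projT2 s) /\
  exists f : projT1 s -> prod_alg E,
    is_hom (projT1 s) (prod_alg E) f /\ forall x, f (projT2 s x) = h x.

Definition sol_le (S : signature) (F : algebra S) (s s' : cand F) : Prop :=
  exists f : projT1 s' -> projT1 s,
    is_hom (projT1 s') (projT1 s) f /\ forall x, f (projT2 s' x) = projT2 s x.

Definition kernel (S : signature) (F : algebra S) (s : cand F) : F -> F -> Prop :=
  fun x y => projT2 s x = projT2 s y.

Definition Gh (S : signature) (V : variety S) (F : algebra S)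
    (m : nat) (E : 'I_m -> algebra S) (h : F -> prod_alg E)
    (R : F -> F -> Prop) : Prop :=
  exists s : cand F, is_solution V h s /\ R = kernel s.

Definition subrel (T : Type) (R1 R2 : T -> T -> Prop) : Prop :=
  forall x y, R1 x y -> R2 x y.

Definition min_complete (T : Type) (D : T -> Prop) (le : T -> T -> Prop)
    (M : T -> Prop) : Prop :=
  (forall x, M x -> D x) /\
  (forall x y, M x -> M y -> le x y -> x = y) /\
  (forall x, D x -> exists m, M m /\ le m x).

Definition card_one (T : Type) (M : T -> Prop) : Prop :=
  exists x, forall y, M y <-> y = x.

Definition card_finite (T : Type) (M : T -> Prop) : Prop :=
  exists s : seq T, List.NoDup s /\ forall y, M y <-> List.In y s.

Definition card_finite_gt1 (T : Type) (M : T -> Prop) : Prop :=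
  exists s : seq T, List.NoDup s /\ 1 < size s /\ forall y, M y <-> List.In y s.

Inductive unif_type := Unitary | Finitary | Infinitary | Nullary.

Definition has_type (T : Type) (D : T -> Prop) (le : T -> T -> Prop)
    (t : unif_type) : Prop :=
  match t with
  | Unitary => exists M, min_complete D le M /\ card_one M
  | Finitary => exists M, min_complete D le M /\ card_finite_gt1 M
  | Infinitary => exists M, min_complete D le M /\ ~ card_finite M
  | Nullary => ~ exists M, min_complete D le M
  end.

Definition egen_type (S : signature) (V : variety S) (F : algebra S)
    (m : nat) (E : 'I_m -> algebra S) (h : F -> prod_alg E) (t : unif_type) :=
  has_type (is_solution V h) (@sol_le S F) t.

(* Type of (G(h), ⊆) w.r.t. maximal complete sets: minimal complete sets
   for the reversed inclusion order. *)
Definition G_type (S : signature) (V : variety S) (F : algebra S)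
    (m : nat) (E : 'I_m -> algebra S) (h : F -> prod_alg E) (t : unif_type) :=
  has_type (Gh V h) (fun R1 R2 => subrel R2 R1) t.

Definition egen_problem (S : signature) (V : variety S) (F : algebra S)
    (m : nat) (E : 'I_m -> algebra S) (h : F -> prod_alg E) : Prop :=
  is_hom F (prod_alg E) h /\
  (forall k, one_generated (E k) /\ exact V (E k)) /\
  (forall k (y : E k), exists x, h x k = y).

(* Main.v *)
Require Import Defs.
From mathcomp Require Import all_boot.
From Stdlib Require Import Classical FunctionalExtensionality PropExtensionality.
From Stdlib Require List.

Lemma min_exists (T : Type) (r : T -> T -> Prop)
  (rtr : forall x y z, r x y -> r y z -> r x z) (rrefl : forall x, r x x) :
  forall K x, List.In x K -> exists y, List.In y K /\ r y x /\
    forall z, List.In z K -> r z y -> r y z.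
Proof.
induction K as [|a K IH]; first by [].
have Ha : exists y, List.In y (a :: K) /\ r y a /\
    forall z, List.In z (a :: K) -> r z y -> r y z.
  destruct (classic (exists z, List.In z K /\ r z a /\ ~ r a z))
    as [[z [Hz [Hza Hnaz]]] | Hno].
  - destruct (IH z Hz) as [y [Hy [Hyz Hmin]]].
    exists y; split; [by right|]; split; [by eauto|].
    intros w [<-|Hw] Hwy.
    + exfalso; apply Hnaz; eauto.
    + by apply Hmin.
  - exists a; split; [by left|]; split; [by auto|].
    intros w [<-|Hw] Hwa; first by auto.
    destruct (classic (r a w)) as [H|H]; first by [].
    exfalso; apply Hno; exists w; auto.
intros x [<-|Hx]; first exact Ha.
destruct (IH x Hx) as [y [Hy [Hyx Hmin]]].
destruct (classic (r a y /\ ~ r y a)) as [[Hay Hnya]|Hn].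
- destruct Ha as [y' [Hy' [Hy'a Hmin']]].
  exists y'; split; first by [].
  split; last by [].
  eauto.
- exists y; split; [by right|]; split; first by [].
  intros w [<-|Hw] Hwy; last by apply Hmin.
  destruct (classic (r y a)) as [H|H]; first by [].
  exfalso; apply Hn; by split.
Qed.

Lemma finite_sub (T : Type) (s : list T) : forall (P : T -> Prop),
  (forall y, P y -> List.In y s) -> card_finite P.
Proof.
induction s as [|a s IH]; intros P HP.
  exists nil; split; first by constructor.
  intro y; split; [by move/HP|by []].
destruct (IH (fun y => P y /\ y <> a)) as [l [Hl Hiff]].
  intros y [Py Hya]; destruct (HP y Py) as [E|E]; [by subst; exfalso; apply Hya|by []].
destruct (classic (P a)) as [Pa|nPa].
- exists (a :: l); split.
    constructor; last by [].
    by move/Hiff => [_ []].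
  intro y; split.
    intro Py; destruct (classic (y = a)) as [->|Hya]; first by left.
    by right; apply Hiff.
  intros [<-|Hy]; first by [].
  by apply Hiff.
- exists l; split; first by [].
  intro y; split.
    intro Py; apply Hiff; split; first by [].
    by intros ->.
  by move/Hiff => [].
Qed.

Lemma uniq_mc (T : Type) (D : T -> Prop) (le : T -> T -> Prop)
  (tr : forall x y z, le x y -> le y z -> le x z)
  (anti : forall x y, le x y -> le y x -> x = y) M1 M2 :
  min_complete D le M1 -> min_complete D le M2 -> forall y, M1 y -> M2 y.
Proof.
intros [D1 [I1 C1]] [D2 [I2 C2]] y My.
destruct (C2 y (D1 y My)) as [m2 [Hm2 Hle2]].
destruct (C1 m2 (D2 m2 Hm2)) as [m1 [Hm1 Hle1]].
have E : m1 = y by apply I1; eauto.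
subst m1.
by rewrite -(anti _ _ Hle2 Hle1).
Qed.

Lemma rel_anti (T : Type) (R1 R2 : T -> T -> Prop) :
  Defs.subrel R2 R1 -> Defs.subrel R1 R2 -> R1 = R2.
Proof.
intros H1 H2; apply functional_extensionality; intro x;
  apply functional_extensionality; intro y.
apply propositional_extensionality; split; [apply H2|apply H1].
Qed.

Lemma ker_mono (S : signature) (F : algebra S) (s s' : cand F) :
  sol_le s s' -> Defs.subrel (kernel s') (kernel s).
Proof.
intros [f [_ Hf]] x y Hxy; unfold kernel in *.
by rewrite -!Hf Hxy.
Qed.

Lemma G_finite (S : signature) (V : variety S) (F : algebra S)
  (m : nat) (E : 'I_m -> algebra S) (h : F -> prod_alg E) M :
  min_complete (is_solution V h) (@sol_le S F) M -> card_finite M ->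
  exists M', min_complete (Gh V h) (fun R1 R2 => Defs.subrel R2 R1) M' /\
    card_finite M'.
Proof.
intros [MD [MI MC]] [s [_ Hs]].
set K := List.map (@kernel S F) s.
set le := (fun R1 R2 : F -> F -> Prop => Defs.subrel R2 R1).
have tr : forall x y z, le x y -> le y z -> le x z.
  by rewrite /le /Defs.subrel; intros x y z H1 H2 a b H; apply H1, H2.
have rf : forall x, le x x by rewrite /le /Defs.subrel; auto.
exists (fun R => List.In R K /\ forall z, List.In z K -> le z R -> le R z).
split; last first.
  by apply (@finite_sub _ K); intros y [Hy _].
split.
  intros R [HR _]; apply List.in_map_iff in HR.
  destruct HR as [x [Hx Hin]].
  exists x; split; last by rewrite Hx.
  by apply MD, Hs.
split.
  intros x y [Hx _] [Hy Hmin] Hxy.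
  apply rel_anti; [exact Hxy| exact (Hmin x Hx Hxy)].
intros R [g [Hg ->]].
destruct (MC g Hg) as [mm [Hmm Hle]].
have Hk : List.In (kernel mm) K.
  by apply List.in_map, Hs.
destruct (@min_exists _ le tr rf K _ Hk) as [y [Hy [Hyk Hmin]]].
exists y; split; first by split.
apply (tr _ _ _ Hyk).
exact (@ker_mono _ _ _ _ Hle).
Qed.

Theorem theorem4p18 (S : signature) (V : variety S) (F : algebra S) (z : F)
  (HF : is_free V (fun _ : unit => z))
  (m : nat) (E : 'I_m -> algebra S) (h : F -> prod_alg E)
  (Hh : egen_problem V h) :
  ((G_type V h Nullary \/ G_type V h Infinitary) ->
     (egen_type V h Infinitary \/ egen_type V h Nullary)) /\
  (G_type V h Finitary -> ~ egen_type V h Unitary).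
Proof.
set le := (fun R1 R2 : F -> F -> Prop => Defs.subrel R2 R1).
have tr : forall x y z, le x y -> le y z -> le x z.
  by rewrite /le /Defs.subrel; intros x y z' H1 H2 a b H; apply H1, H2.
have anti : forall x y, le x y -> le y x -> x = y.
  by intros x y H1 H2; apply rel_anti.
split.
- intros HG.
  destruct (classic (exists M, min_complete (is_solution V h) (@sol_le S F) M))
    as [[M HM]|HnM]; last by right.
  destruct (classic (card_finite M)) as [Hf|Hnf]; last by left; exists M.
  exfalso.
  destruct (@G_finite _ _ _ _ _ _ _ HM Hf) as [M' [HM' Hf']].
  destruct HG as [HG|[M'' [HM'' Hnf'']]].
    by apply HG; exists M'.
  apply Hnf''.
  destruct Hf' as [l [Hl Hiff]].
  exists l; split; first by [].
  intro y; rewrite -Hiff; split.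
    exact (@uniq_mc _ _ le tr anti _ _ HM'' HM' y).
    exact (@uniq_mc _ _ le tr anti _ _ HM' HM'' y).
- intros [M' [[D' [I' C']] [l [Hl [Hsz Hiff]]]]] [M [[MD [MI MC]] [g0 Hg0]]].
  have Hg0M : M g0 by apply Hg0.
  have Hall : forall R, Gh V h R -> le (kernel g0) R.
    intros R [g [Hg ->]].
    destruct (MC g Hg) as [mm [Hmm Hle]].
    apply Hg0 in Hmm; subst mm.
    exact (@ker_mono _ _ _ _ Hle).
  have HK : Gh V h (kernel g0) by exists g0; split; [apply MD|].
  destruct (C' _ HK) as [mm [Hmm Hle]].
  destruct l as [|a [|b l]]; try by [].
  have Ha : M' a by apply Hiff; left.
  have Hb : M' b by apply Hiff; right; left.
  have ea : mm = a by apply I'; [| |apply (tr _ _ _ Hle), Hall, D'].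
  have eb : mm = b by apply I'; [| |apply (tr _ _ _ Hle), Hall, D'].
  inversion Hl as [|x l' Hn Hl']; subst.
  by apply Hn; left.
Qed.
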